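(* For every $N\ge3$ and every $\lambda\in(0,1]$, the matrix $M(\lambda)$ is primitive (some power of it has all entries strictly positive).
   Context: Fix an integer $N\ge 3$. Let $\mathcal G_N$ be the groupoid with object set $\{1,\dots,N\}$ generated by arrows $A_{i,j}^{(k)}$, $i\neq j\in\{1,\dots,N\}$, $k\in\{-1,1\}$, with source $i$ and target $j$, subject to the relations $A_{i,j}^{(k)}A_{j,\ell}^{(k)}=A_{i,\ell}^{(k)}$ for all $i,j,\ell$, $k$, with the convention $A_{i,i}^{(k)}:=e_i$ (unit at object $i$). Let $\mathcal A$ be its arrow set. Let $\{W_n\}_{n\ge0}$ be the Markov chain on $\mathcal A$ with $P(W_{n+1}=y\mid W_n=x)=p_{i,j}^{(k)}$ if $x^{-1}y=A_{i,j}^{(k)}$ with $i\ne j$ and $0$ otherwise, where $p_{i,j}^{(k)}\in(0,1)$ and $\sum_{j\ne i}\sum_{k=\pm1}p_{i,j}^{(k)}=1$ for each $i$; $E_x$ denotes expectation with $W_0=x$. For $x\in\mathcal A$ let $T(0,x)=\inf\{n\ge0:W_n=W_0x\}$ (possibly $\infty$) and $R_{i,j}^{(k)}(\lambda)=E_{e_i}[\lambda^{T(0,A_{i,j}^{(k)})}]$. $M(\lambda)$ is the $2N(N-1)\times2N(N-1)$ matrix with rows and columns indexed by triples $(i,j,k)$, $i\ne j$, $k\in\{\pm1\}$, whose entry in row $(i,j,k)$ and column $(i',j',k')$ is: $\lambda p_{i,i'}^{(k)}$ if $i'\notin\{i,j\}$, $j'=j$, $k'=k$; $\lambda p_{i,i'}^{(-k)}R_{i,j}^{(k)}(\lambda)$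 if $i'\ne i$, $j'=i$, $k'=-k$; $\lambda\sum_{\ell\neq i}p_{i,\ell}^{(-k)}R_{\ell,i}^{(-k)}(\lambda)$ if $(i',j',k')=(i,j,k)$; and $0$ otherwise. *)

(* Defs.v *)
From HB Require Import structures.
From mathcomp Require Import all_boot all_order all_algebra.
From mathcomp Require Import all_classical all_reals all_analysis.
Set Implicit Arguments. Unset Strict Implicit. Unset Printing Implicit Defensive.
Import Order.TTheory GRing.Theory Num.Theory.
Import numFieldNormedType.Exports.
Local Open Scope ring_scope.

(* Objects of the groupoid G_N are 'I_N (i.e. 0..N-1 instead of 1..N).
   The sign k in {-1,1} is encoded as a bool: true = +1, false = -1,
   so -k is ~~ k.

   Arrows of G_N are represented by their normal form: an arrow with source s
   is a reduced word  A_{s,a1}^{(k1)} A_{a1,a2}^{(k2)} ... A_{a_{m-1},a_m}^{(km)}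
   with consecutive letters of alternating type (k_{l+1} = - k_l) and
   a_{l} <> a_{l+1}; the empty word is the unit e_s.  We store the list of
   letters (a_l, k_l) in REVERSED order (most recent letter first). *)

Section Groupoid.
Variable N : nat.
Notation obj := 'I_N.
Notation letter := (obj * bool)%type.

Definition tgt (s : obj) (rw : seq letter) : obj :=
  if rw is x :: _ then x.1 else s.

(* right multiplication of the arrow (s, rw) by the generator A_{t,j}^{(k)},
   t = tgt s rw, using the relations A^{(k)}_{a,b} A^{(k)}_{b,c} = A^{(k)}_{a,c}
   and A^{(k)}_{t,t} = e_t. *)
Definition mulgen (s : obj) (rw : seq letter) (x : letter) : seq letter :=
  if x.1 == tgt s rw then rw else
  match rw with
  | [::] => [:: x]
  | y :: rest =>
      if y.2 == x.2 then
        (if x.1 == tgt s rest then rest else x :: rest)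
      else x :: rw
  end.

Variable R : realType.
Variable p : obj -> obj -> bool -> R.

(* probability that, being at an arrow with target t, the walk multiplies
   on the right by A_{t,j}^{(k)} (zero if j = t: no such step exists) *)
Definition stepw (t : obj) (x : letter) : R :=
  if x.1 == t then 0 else p t x.1 x.2.

Fixpoint pathw (s : obj) (rw : seq letter) (c : seq letter) : R :=
  match c with
  | [::] => 1
  | x :: c' => stepw (tgt s rw) x * pathw s (mulgen s rw x) c'
  end.

Fixpoint firsthit (s : obj) (rw : seq letter) (tw : seq letter) (c : seq letter)
  : bool :=
  match c with
  | [::] => rw == tw
  | x :: c' => (rw != tw) && firsthit s (mulgen s rw x) tw c'
  end.

(* P_{e_i}( T(0, A_{i,j}^{(k)}) = n ) : W_0 = e_i, target W_0 x = A_{i,j}^{(k)} *)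
Definition hitprob (i j : obj) (k : bool) (n : nat) : R :=
  \sum_(c : n.-tuple letter) pathw i [::] c * (firsthit i [::] [:: (j, k)] c)%:R.

(* R_{i,j}^{(k)}(lambda) = E_{e_i}[lambda^T] = sum_n lambda^n P(T = n)
   (convention lambda^infinity = 0) *)
Definition Rgen (lam : R) (i j : obj) (k : bool) : R :=
  limn (series (fun n : nat => lam ^+ n * hitprob i j k n)).

Definition Idx := {x : obj * obj * bool | x.1.1 != x.1.2}.

Definition Mentry (lam : R) (a b : Idx) : R :=
  let: (i, j, k) := val a in
  let: (i', j', k') := val b in
  if (i' != i) && (i' != j) && (j' == j) && (k' == k) then lam * p i i' k
  else if (i' != i) && (j' == i) && (k' == ~~ k) then
    lam * p i i' (~~ k) * Rgen lam i j k
  else if (i' == i) && (j' == j) && (k' == k) then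
    lam * \sum_(l : obj | l != i) p i l (~~ k) * Rgen lam l i (~~ k)
  else 0.

Definition Mmat (lam : R) : 'M[R]_#|{: Idx}| :=
  \matrix_(a, b) Mentry lam (enum_val a) (enum_val b).

End Groupoid.

Definition primitive_mx (R : realType) (n : nat) (A : 'M[R]_n) : Prop :=
  exists m : nat, forall a b, 0 < (A ^+ m) a b.

(* Main.v *)
Require Import Defs.
From HB Require Import structures.
From mathcomp Require Import all_boot all_order all_algebra.
From mathcomp Require Import all_classical all_reals all_analysis.
From mathcomp Require Import zify.
From Stdlib Require Import Lia.
Set Implicit Arguments. Unset Strict Implicit. Unset Printing Implicit Defensive.
Import Order.TTheory GRing.Theory Num.Theory.
Local Open Scope ring_scope.

Section Aux.
Variable R : realType.

Lemma sum_tuple0 (T : finType) (F : 0.-tuple T -> R) :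
  \sum_(c : 0.-tuple T) F c = F [tuple].
Proof. by rewrite (big_pred1 [tuple]) // => c; apply/esym/eqP/val_inj; case: c => -[]. Qed.

Lemma sum_tupleS (T : finType) n (F : n.+1.-tuple T -> R) :
  \sum_(c : n.+1.-tuple T) F c = \sum_(x : T) \sum_(t : n.-tuple T) F [tuple of x :: t].
Proof.
rewrite pair_bigA /=.
rewrite (reindex (fun q : T * n.-tuple T => [tuple of q.1 :: q.2])) /=.
  by [].
apply: onW_bij; exists (fun t => (thead t, [tuple of behead t])) => [[x t]|t] /=.
  rewrite theadE; congr pair; exact: val_inj.
by rewrite -tuple_eta.
Qed.

Variable N : nat.
Variable p : 'I_N -> 'I_N -> bool -> R.
Hypothesis ppos : forall i j k, i != j -> 0 < p i j k.
Hypothesis psum : forall i, \sum_(j | j != i) \sum_k p i j k = 1.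

Local Notation letter := ('I_N * bool)%type.

Lemma stepw_ge0 t x : 0 <= stepw p t x.
Proof. rewrite /stepw; case: eqP => [_|/eqP h] //; by apply/ltW/ppos; rewrite eq_sym. Qed.

Lemma stepw_sum t : \sum_(x : letter) stepw p t x = 1.
Proof.
rewrite -(psum t) -(pair_bigA _ (fun a b => stepw p t (a,b))) /=.
rewrite (bigID (fun j => j != t)) /= [X in _ + X]big1 ?addr0.
  by apply: eq_bigr => j jt; apply: eq_bigr => k _; rewrite /stepw /= (negbTE jt).
by move=> j /negPn jt; apply: big1 => k _; rewrite /stepw /= jt.
Qed.

Lemma pathw_ge0 s rw c : 0 <= pathw p s rw c.
Proof. by elim: c rw => [|x c IH] rw //=; apply: mulr_ge0 (stepw_ge0 _ _) (IH _). Qed.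

Definition G s rw tw n :=
  \sum_(c : n.-tuple letter) pathw p s rw c * (firsthit s rw tw c)%:R.

Lemma G_ge0 s rw tw n : 0 <= G s rw tw n.
Proof. by apply: sumr_ge0 => c _; apply: mulr_ge0 (pathw_ge0 _ _ _) (ler0n _ _). Qed.

Lemma G0 s rw tw : G s rw tw 0 = (rw == tw)%:R.
Proof. by rewrite /G sum_tuple0 /= mul1r. Qed.

Lemma GS s rw tw n : G s rw tw n.+1 =
  (rw != tw)%:R * \sum_x stepw p (tgt s rw) x * G s (mulgen s rw x) tw n.
Proof.
rewrite /G sum_tupleS mulr_sumr; apply: eq_bigr => x _.
rewrite mulr_sumr mulr_sumr; apply: eq_bigr => t _ /=.
by case: (rw != tw) => /=; rewrite ?mul1r ?mul0r ?mulr0 ?mulrA.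
Qed.

Lemma H_le1 M : forall s rw tw, \sum_(n < M) G s rw tw n <= 1.
Proof.
elim: M => [|M IH] s rw tw; first by rewrite big_ord0 ler01.
rewrite big_ord_recl G0.
case: (eqVneq rw tw) => [->|ne].
  by rewrite big1 ?addr0 ?lexx // => n _; rewrite lift0 GS eqxx mul0r.
rewrite (_ : false%:R = 0) // add0r.
under eq_bigr => n _ do rewrite lift0 GS ne mul1r.
rewrite exchange_big /= -(stepw_sum (tgt s rw)).
apply: ler_sum => x _; rewrite -mulr_sumr.
exact: ler_piMr (stepw_ge0 _ _) (IH _ _ _).
Qed.

Lemma Rgen_pos lam i j k : 0 < lam <= 1 -> i != j -> 0 < Rgen p lam i j k.
Proof.
move=> /andP[l0 l1] ij.
set u := fun n => lam ^+ n * hitprob p i j k n.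
have u0 n : 0 <= u n by apply: mulr_ge0 (exprn_ge0 _ (ltW l0)) (G_ge0 _ _ _ _).
have hom : {homo series u : n m / (n <= m)%N >-> n <= m}.
  by apply: nondecreasing_series => n _ _; exact: u0.
have ub : has_ubound (range (series u)).
  exists 1 => _ [n _ <-]; rewrite /series /= big_mkord.
  apply: le_trans (H_le1 n i [::] [:: (j, k)]).
  apply: ler_sum => m _; apply: ler_piMl; first exact: G_ge0.
  exact: exprn_ile1 (ltW l0) l1.
have cv := nondecreasing_is_cvgn hom ub.
apply: lt_le_trans (nondecreasing_cvgn_le hom cv 2).
rewrite /series /= big_mkord !big_ord_recr big_ord0 /= add0r.
apply: ltr_wpDl (u0 _) _.
rewrite /u /= expr1; apply: mulr_gt0; first exact: l0.
have -> : hitprob p i j k 1 = G i [::] [:: (j,k)] 1 by []. rewrite GS /= mul1r.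
under eq_bigr => x _ do rewrite G0.
rewrite (bigD1 (j, k)) //=; apply: (@ltr_wpDr R).
  by apply: sumr_ge0 => x _; apply: mulr_ge0 (stepw_ge0 _ _) (ler0n _ _).
rewrite /stepw /mulgen /= eq_sym (negbTE ij) eqxx mulr1; exact: ppos.
Qed.

End Aux.

Section Mx.
Variable R : realType.

Lemma mx_pow_ge0 n (A : 'M[R]_n) : (forall a b, 0 <= A a b) ->
  forall m a b, 0 <= (A ^+ m) a b.
Proof.
move=> A0; elim=> [|m IH] a b.
  by rewrite expr0 mxE; apply: mulrn_wge0.
rewrite exprSr -mulmxE mxE; apply: sumr_ge0 => c _; exact: mulr_ge0.
Qed.

Lemma mx_pow_step n (A : 'M[R]_n) m a c b : (forall a b, 0 <= A a b) ->
  0 < (A ^+ m) a c -> 0 < A c b -> 0 < (A ^+ m.+1) a b.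
Proof.
move=> A0 h1 h2; rewrite exprSr -mulmxE mxE (bigD1 c) //=.
apply: (@ltr_wpDr R); first by apply: sumr_ge0 => d _; apply: mulr_ge0 (mx_pow_ge0 A0 _ _ _) (A0 _ _).
exact: mulr_gt0.
Qed.

Variable N : nat.
Hypothesis N3 : (2 < N)%N.
Variable p : 'I_N -> 'I_N -> bool -> R.
Hypothesis ppos : forall i j k, i != j -> 0 < p i j k.
Variable lam : R.
Hypothesis l0 : 0 < lam.
Hypothesis Rpos : forall i j k, i != j -> 0 < Rgen p lam i j k.

Lemma fresh (a b : 'I_N) : exists z : 'I_N, (z != a) && (z != b).
Proof.
case: (boolP [exists z : 'I_N, (z != a) && (z != b)]) => [/existsP//|].
rewrite negb_exists => /forallP h.
have h0 := h (Ordinal (ltn_trans (isT : (0 < 2)%N) N3)).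
have h1 := h (Ordinal (ltn_trans (isT : (1 < 2)%N) N3)).
have h2 := h (Ordinal N3).
move: h0 h1 h2; rewrite !negb_and !negbK.
case/orP=> /eqP/(f_equal val) /= e0; case/orP=> /eqP/(f_equal val) /= e1;
case/orP=> /eqP/(f_equal val) /= e2; lia.
Qed.

Lemma Mentry_ge0 a b : 0 <= Mentry p lam a b.
Proof.
case: a => x; case: x => -[i j] k /= ij; case: b => y; case: y => -[i' j'] k' /= hb.
rewrite /Mentry /=.
case: ifP => [/andP[/andP[/andP[h1 _] _] _]|_].
  by apply: mulr_ge0; [exact: ltW l0 | apply/ltW/ppos; rewrite eq_sym].
case: ifP => [/andP[/andP[h1 _] _]|_].
  apply: mulr_ge0; last exact/ltW/Rpos.
  by apply: mulr_ge0; [exact: ltW l0 | apply/ltW/ppos; rewrite eq_sym].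
case: ifP => _ //.
apply: mulr_ge0; first exact: ltW l0.
apply: sumr_ge0 => l li.
by apply: mulr_ge0; [apply/ltW/ppos; rewrite eq_sym | exact/ltW/Rpos].
Qed.

Lemma Mentry_diag a : 0 < Mentry p lam a a.
Proof.
case: a => x; case: x => -[i j] k /= ij; rewrite /Mentry /= !eqxx /=.
apply: mulr_gt0; first exact: l0.
have [l /andP[li _]] := fresh i i.
rewrite (bigD1 l) //=; apply: (@ltr_wpDr R).
  apply: sumr_ge0 => l' /andP[l'i _].
  by apply: mulr_ge0; [apply/ltW/ppos; rewrite eq_sym | exact/ltW/Rpos].
by apply: mulr_gt0; [apply/ppos; rewrite eq_sym | exact/Rpos].
Qed.

Lemma Mentry_T2 a b : (val b).1.1 != (val a).1.1 -> (val b).1.2 = (val a).1.1 ->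
  (val b).2 = ~~ (val a).2 -> 0 < Mentry p lam a b.
Proof.
case: a => x; case: x => -[i j] k /= ij; case: b => y; case: y => -[i' j'] k' /= hb h1 h2 h3.
subst j' k'; rewrite /Mentry /= (negbTE ij) !andbF /= h1 !eqxx /=.
apply: mulr_gt0; last exact/Rpos.
by apply: mulr_gt0; [exact: l0 | apply/ppos; rewrite eq_sym].
Qed.

Definition mk (i j : 'I_N) (k : bool) (h : i != j) : Idx N :=
  exist (fun x : 'I_N * 'I_N * bool => x.1.1 != x.1.2) (i, j, k) h.

Lemma path4 (u v : Idx N) : exists x1 x2 x3,
  [/\ 0 < Mentry p lam u x1, 0 < Mentry p lam x1 x2,
      0 < Mentry p lam x2 x3 & 0 < Mentry p lam x3 v].
Proof.
case: u => x; case: x => -[a b] k /= hab; case: v => y; case: y => -[c d] k' /= hcd.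
have dsym (e f : 'I_N) : e != f -> f != e by rewrite eq_sym.
case: (boolP (k' == k)) => [/eqP ek|nk].
- have [x /andP[xa _]] := fresh a a.
  have [y /andP[yx yd]] := fresh x d.
  exists (mk (~~ k) xa), (mk k yx), (mk (~~ k) (dsym _ _ yd)).
  split; apply: Mentry_T2 => //=; by rewrite ?ek ?negbK // eq_sym.
- have ek : k' = ~~ k by move: nk; case: k; case: k'.
  have [x /andP[xa xd]] := fresh a d.
  exists (mk k hab), (mk (~~ k) xa), (mk k (dsym _ _ xd)).
  split; first exact: Mentry_diag.
  all: apply: Mentry_T2 => //=; by rewrite ?ek ?negbK // eq_sym.
Qed.

End Mx.

Theorem lemmaA1 (R : realType) (N : nat) (p : 'I_N -> 'I_N -> bool -> R)
  (lam : R) :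
  (2 < N)%N ->
  (forall (i j : 'I_N) (k : bool), i != j -> 0 < p i j k < 1) ->
  (forall i : 'I_N, \sum_(j : 'I_N | j != i) \sum_(k : bool) p i j k = 1) ->
  0 < lam <= 1 ->
  primitive_mx (Mmat p lam).
Proof.
move=> N3 pb psum hl; have /andP[l0 l1] := hl.
have ppos i j k : i != j -> 0 < p i j k by move=> h; case/andP: (pb i j k h).
have Rpos i j k : i != j -> 0 < Rgen p lam i j k.
  by move=> h; exact: (Rgen_pos ppos psum k hl h).
have A0 : forall a b, 0 <= Mmat p lam a b.
  by move=> a b; rewrite mxE; exact: (Mentry_ge0 ppos l0 Rpos).
exists 4%N => a b.
have [x1 [x2 [x3 [h1 h2 h3 h4]]]] :=
  path4 N3 ppos l0 Rpos (enum_val a) (enum_val b).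
have e x y : Mmat p lam (enum_rank x) (enum_rank y) = Mentry p lam x y.
  by rewrite mxE !enum_rankK.
apply: (@mx_pow_step _ _ _ 3 a (enum_rank x3) b A0); last by rewrite -[b]enum_valK e.
apply: (@mx_pow_step _ _ _ 2 a (enum_rank x2) _ A0); last by rewrite e.
apply: (@mx_pow_step _ _ _ 1 a (enum_rank x1) _ A0); last by rewrite e.
by rewrite expr1 -[a]enum_valK e.
Qed.
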